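(* Let $\Omega=\{1,\dots,m\}^{\mathbb{N}}$, let $\mathcal{M}$ be the set of Borel probabilities on $\Omega$ with the Monge–Kantorovich metric $d_{MK}$, and let $R:\Omega\times\Omega\to\Omega$ be continuous and $s$-Lipschitz in the second variable, i.e. $d_\Omega(R(x,y),R(x,y'))\le s\,d_\Omega(y,y')$ for all $x,y,y'\in\Omega$. Let $*$ be the convolution associated to $R$. Then for each fixed $\eta\in\mathcal{M}$, the map $\mu\mapsto\eta*\mu$ is $s$-Lipschitz with respect to $d_{MK}$: $d_{MK}(\eta*\mu,\eta*\mu')\le s\,d_{MK}(\mu,\mu')$ for all $\mu,\mu'\in\mathcal{M}$.
   Context: $d_\Omega(\alpha,\beta)=2^{-k}$ with $k=\min\{i:\alpha_i\neq\beta_i\}$ (and $0$ if $\alpha=\beta$); $d_{MK}(\mu,\nu)=\sup\{\int f\,d\mu-\int f\,d\nu : f \text{ 1-Lipschitz}\}$. The convolution associated to $R$ is defined for $\nu,\mu\in\mathcal{M}$ by $(\nu*\mu)(E)=(\nu\times\mu)(R^{-1}(E))$, i.e. $\int_\Omega f\,d(\nu*\mu)=\int\int f(R(x,y))\,d\nu(x)\,d\mu(y)$ for all continuous $f:\Omega\to\mathbb{R}$. *)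

(* Defs.v *)
From HB Require Import structures.
From mathcomp Require Import all_boot all_order all_algebra.
From mathcomp Require Import all_classical all_reals all_analysis.
Set Implicit Arguments. Unset Strict Implicit. Unset Printing Implicit Defensive.
Import Order.TTheory GRing.Theory Num.Theory.
Import numFieldNormedType.Exports.
Local Open Scope classical_set_scope.
Local Open Scope ring_scope.

(* Alphabet {1,...,m} is represented by 'I_m (with m >= 1, written m.+1).
   Omega m = {1..m.+1}^N, the one-sided full shift. *)
Definition Omega (m : nat) := nat -> 'I_m.+1.
HB.instance Definition _ m := gen_eqMixin (Omega m).
HB.instance Definition _ m := gen_choiceMixin (Omega m).
HB.instance Definition _ m := isPointed.Build (Omega m) (fun _ => ord0).

Section Defs.
Context {R : realType} {m : nat}.

Definition dOm (a b : Omega m) : R :=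
  match pselect (exists i, a i != b i) with
  | left H => 2 ^- (ex_minn H)
  | right _ => 0
  end.

Definition OpenOm : set (set (Omega m)) :=
  [set U | forall x, U x -> exists2 e : R, 0 < e &
             forall y, dOm x y < e -> U y].
End Defs.

Notation BOmega R m := (g_sigma_algebraType (@OpenOm R m)).

Section Defs2.
Context {R : realType} {m : nat}.
Local Notation B := (BOmega R m).

Definition lip1 (f : B -> R) : Prop :=
  forall a b : B, `|f a - f b| <= dOm a b.

Definition dMK (mu nu : probability B R) : R :=
  sup [set r : R | exists2 f : B -> R, lip1 f &
         r = (\int[mu]_x f x) - (\int[nu]_x f x)].

Definition contOm2 (R0 : B -> B -> B) : Prop :=
  forall (x y : B) (e : R), 0 < e -> exists2 d : R, 0 < d &
    forall x' y' : B, dOm x x' < d -> dOm y y' < d ->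
      dOm (R0 x y) (R0 x' y') < e.

Definition is_conv (R0 : B -> B -> B) (nu mu : probability B R)
    (rho : probability B R) : Prop :=
  forall E : set B, measurable E ->
    rho E = (nu \x mu)%E ((fun p : B * B => R0 p.1 p.2) @^-1` E).
End Defs2.

(* Main.v *)
Require Import Defs.
From HB Require Import structures.
From mathcomp Require Import all_boot all_order all_algebra.
From mathcomp Require Import all_classical all_reals all_analysis.
From mathcomp Require Import lra measurable_realfun.
Import Order.TTheory GRing.Theory Num.Theory.
Import numFieldNormedType.Exports.
Local Open Scope classical_set_scope.
Local Open Scope ring_scope.
Set Implicit Arguments. Unset Strict Implicit.

Section dOm_lemmas.
Context {R : realType} {m : nat}.
Implicit Types a b : Omega m.

Definition agree n a b := forall i, (i < n)%N -> a i = b i.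

Lemma dOm_ge0 a b : 0 <= dOm (R:=R) a b.
Proof. rewrite /dOm; case: pselect => // H; exact: ltW. Qed.

Lemma dOm_le1 a b : dOm (R:=R) a b <= 1.
Proof. rewrite /dOm; case: pselect => // H. rewrite invf_le1 ?exprn_gt0 //.
  by rewrite exprn_ege1 // ler1n. Qed.

Lemma dOm_eq0 a b : dOm (R:=R) a b = 0 -> a = b.
Proof.
rewrite /dOm; case: pselect => [H|H _].
  by move/eqP; rewrite invr_eq0 expf_eq0 pnatr_eq0 andbF.
apply: funext => i; apply/eqP; apply: contra_notT H => Hi; by exists i.
Qed.

Lemma dOm_xx a : dOm (R:=R) a a = 0.
Proof. rewrite /dOm; case: pselect => // H; exfalso; case: H => i; by rewrite eqxx. Qed.

Lemma agree_dOm n a b : agree n a b -> dOm (R:=R) a b <= 2 ^- n.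
Proof.
move=> Hab; rewrite /dOm; case: pselect => [H|H]; last first.
  by rewrite invr_ge0 exprn_ge0.
case: ex_minnP => k Hk _.
have nk : (n <= k)%N.
  rewrite leqNgt; apply/negP => kn; by rewrite Hab ?eqxx in Hk.
rewrite lef_pV2 ?posrE ?exprn_gt0 //.
by rewrite ler_eXn2l // ltr1n.
Qed.

Lemma dOm_agree n a b : dOm (R:=R) a b < 2 ^- n -> agree n a b.
Proof.
move=> H i ilt; apply/eqP; apply: contraLR H => Hi.
rewrite -leNgt /dOm; case: pselect => [H|H]; last by exfalso; apply H; exists i.
case: ex_minnP => k Hk Hmin.
have := Hmin _ Hi => ki.
rewrite lef_pV2 ?posrE ?exprn_gt0 //.
rewrite ler_eXn2l // ?ltr1n //; exact: ltnW (leq_ltn_trans ki ilt).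
Qed.

Lemma exists_pow_lt (d : R) : 0 < d -> exists n, 2 ^- n < d.
Proof.
move=> d0.
have [n Hn] : exists n : nat, d^-1 < n%:R.
  exists (Num.Def.trunc (d^-1)).+1; exact: truncnS_gt.
exists n.
rewrite -(invrK d) ltf_pV2 ?posrE ?exprn_gt0 ?invr_gt0 //.
apply: lt_le_trans Hn _.
rewrite -natrX ler_nat; exact: ltnW (ltn_expl n (ltnSn 1)).
Qed.

End dOm_lemmas.

Section meas.
Context {R : realType} {m : nat}.
Local Notation B := (BOmega R m).

Lemma open_meas (U : set B) : OpenOm (R:=R) U -> measurable U.
Proof. move=> HU; exact: sub_sigma_algebra. Qed.

Lemma cont_measR (f : B -> R) :
  (forall x e, 0 < e -> exists2 d, 0 < d & forall y, dOm (R:=R) x y < d -> `|f x - f y| < e) ->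
  measurable_fun setT f.
Proof.
move=> cf; apply: (measurability _ (RGenOpens.measurableE R)).
move=> _ [_ [a [b ->]] <-]; rewrite setTI; apply: open_meas => x /=.
rewrite in_itv /= => /andP[ax xb].
have [d d0 Hd] := cf x (Num.min (f x - a) (b - f x)) ltac:(rewrite lt_min; apply/andP; split; lra).
exists d => // y /Hd; rewrite lt_min => /andP[h1 h2].
rewrite in_itv /=; apply/andP; split.
  move: h1; rewrite ltr_norml => /andP[? ?]; lra.
move: h2; rewrite ltr_norml => /andP[? ?]; lra.
Qed.

Lemma cont_measB (g : B -> B) :
  (forall x e, 0 < e -> exists2 d, 0 < d & forall y, dOm (R:=R) x y < d -> dOm (R:=R) (g x) (g y) < e) ->
  measurable_fun setT g.
Proof.
move=> cg; apply: (@measurability _ _ _ B setT _ (@OpenOm R m : set (set B))) => //.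
move=> _ [U HU <-]; rewrite setTI; apply: open_meas => x /= Ux.
have [e e0 He] := HU _ Ux.
have [d d0 Hd] := cg x e e0.
exists d => // y /Hd; exact: He.
Qed.

Definition cyl n (a : B) : set B := [set x | agree n a x].

Lemma cyl_meas n a : measurable (cyl n a).
Proof.
apply: open_meas => x /= ax; exists (2 ^- n : R); first by rewrite invr_gt0 exprn_gt0.
move=> y /dOm_agree xy i ilt; rewrite ax // xy //.
Qed.

Definition ext n (a : {ffun 'I_n -> 'I_m.+1}) : B :=
  fun i => oapp a ord0 (insub i).

Definition trunc n (x : B) : {ffun 'I_n -> 'I_m.+1} := [ffun j => x (val j)].

Lemma ext_trunc n x : agree n (ext (trunc n x)) x.
Proof.
move=> i ilt; rewrite /ext; case: insubP => [j _ <-|]; last by rewrite ilt.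
by rewrite /= ffunE.
Qed.

Lemma agree_trans n (a b c : B) : agree n a b -> agree n b c -> agree n a c.
Proof. by move=> h1 h2 i ilt; rewrite h1 // h2. Qed.
Lemma agree_sym n (a b : B) : agree n a b -> agree n b a.
Proof. by move=> h1 i ilt; rewrite h1. Qed.

Lemma R0_meas (R0 : B -> B -> B) : contOm2 R0 ->
  measurable_fun setT (fun p : B * B => R0 p.1 p.2).
Proof.
move=> cR; apply: (@measurability _ _ _ B setT _ (@OpenOm R m : set (set B))) => //.
move=> _ [U HU <-]; rewrite setTI.
pose W n := [set p : B * B | forall x' y', agree n p.1 x' -> agree n p.2 y' -> U (R0 x' y')].
have -> : (fun p : B * B => R0 p.1 p.2) @^-1` U = \bigcup_n W n.
  apply/seteqP; split => [[x y] /= Uxy|[x y] [n _ /= Wn]]; last first.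
    by apply: Wn.
  have [e e0 He] := HU _ Uxy.
  have [d d0 Hd] := cR x y e e0.
  have [n Hn] := exists_pow_lt d0.
  exists n => // x' y' /= hx hy; apply: He; apply: Hd.
    exact: le_lt_trans (agree_dOm hx) Hn.
  exact: le_lt_trans (agree_dOm hy) Hn.
apply: bigcupT_measurable => n.
pose T := ({ffun 'I_n -> 'I_m.+1} * {ffun 'I_n -> 'I_m.+1})%type.
have -> : W n = \bigcup_(ab in [set ab : T | W n (ext ab.1, ext ab.2)])
     (cyl n (ext ab.1) `*` cyl n (ext ab.2)).
  apply/seteqP; split => [[x y] /= Wxy|[x y] [[a b] /= Wab [/= ax bx]]].
    exists (trunc n x, trunc n y) => /=.
      move=> x' y' /= h1 h2; apply: Wxy.
        by move=> i ilt /=; rewrite -h1 // ext_trunc.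
      by move=> i ilt /=; rewrite -h2 // ext_trunc.
    by split; apply: ext_trunc.
  move=> x' y' /= h1 h2; apply: Wab.
    exact: agree_trans ax h1.
  exact: agree_trans bx h2.
apply: fin_bigcup_measurable; first exact: finite_finset.
move=> ab _; apply: measurableX; exact: cyl_meas.
Qed.

End meas.

Section integ.
Context {R : realType} {m : nat}.
Local Notation B := (BOmega R m).

Lemma lip1_meas (f : B -> R) : lip1 f -> measurable_fun setT f.
Proof.
move=> lf; apply: cont_measR => x e e0; exists e => // y h.
exact: le_lt_trans (lf x y) h.
Qed.

Lemma bnd_int d (T : measurableType d) (P : probability T R) (h : T -> R) (M : R) :
  measurable_fun setT h -> (forall x, `|h x| <= M) -> P.-integrable setT (EFin \o h).
Proof.
move=> mh hM; apply: measurable_bounded_integrable => //.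
  exact: (le_lt_trans (probability_le1 P measurableT)) (ltey _).
exists M; split; first exact: num_real.
move=> M' HM' x _; exact: le_trans (hM x) (ltW HM').
Qed.

Lemma Rint_cst d (T : measurableType d) (P : probability T R) (h : T -> R) c :
  (forall x, h x = c) -> \int[P]_x h x = c.
Proof.
move=> hc; rewrite (@eq_Rintegral _ _ _ P setT (fun _ => c)); last by move=> x _; rewrite hc.
rewrite Rintegral_cst //; have -> : fine (P setT) = 1 by rewrite (probability_setT P).
by rewrite mulr1.
Qed.


Lemma lip1_bnd (f : B -> R) : lip1 f -> forall x, `|f x| <= `|f point| + 1.
Proof.
move=> lf x; have -> : f x = f point + (f x - f point) by rewrite addrC subrK.
apply: le_trans (ler_normD _ _) _; rewrite lerD2l.
exact: le_trans (lf x point) (dOm_le1 _ _).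
Qed.

Lemma R0x_meas (R0 : B -> B -> B) x : contOm2 R0 -> measurable_fun setT (R0 x).
Proof.
move=> cR; apply: cont_measB => y e e0.
have [d d0 Hd] := cR x y e e0; exists d => // y' h.
by apply: Hd => //; rewrite dOm_xx.
Qed.

Lemma conv_int (R0 : B -> B -> B) (eta mu rho : probability B R) (f : B -> R) :
  contOm2 R0 -> is_conv R0 eta mu rho -> lip1 f ->
  \int[rho]_x f x = \int[eta]_x (\int[mu]_y f (R0 x y)).
Proof.
move=> cR hc lf.
pose phi := fun p : B * B => R0 p.1 p.2.
have mphi : measurable_fun setT phi := R0_meas cR.
have mf := lip1_meas lf.
have mEf : measurable_fun setT (EFin \o f) by exact/measurable_EFinP.
have iF : (eta \x mu)%E.-integrable setT (EFin \o (f \o phi)).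
  apply: (@bnd_int _ _ _ _ (`|f point| + 1)); first exact: measurableT_comp mf mphi.
  move=> p; exact: lip1_bnd.
rewrite /Rintegral; congr fine.
rewrite (@eq_measure_integral _ _ _ setT (pushforward (eta \x mu)%E phi)); last first.
  move=> A mA _; have := hc A mA; rewrite /pushforward => h; exact h.
rewrite (integral_pushforward mphi mEf); [|by rewrite preimage_setT|exact: measurableT].
rewrite preimage_setT.
rewrite -(integral12_prod_meas1 iF).
apply: eq_integral => x _.
rewrite /fubini_F /=.
have ix : mu.-integrable setT (EFin \o (fun y => f (R0 x y))).
  apply: (@bnd_int _ _ _ _ (`|f point| + 1)); first exact: measurableT_comp mf (R0x_meas x cR).
  move=> p; exact: lip1_bnd.
by rewrite fineK //; exact: integrable_fin_num ix.
Qed.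


Lemma Ir_int (R0 : B -> B -> B) (eta mu : probability B R) (f : B -> R) :
  contOm2 R0 -> lip1 f ->
  eta.-integrable setT (EFin \o (fun x => \int[mu]_y f (R0 x y))).
Proof.
move=> cR lf.
pose phi := fun p : B * B => R0 p.1 p.2.
have mphi : measurable_fun setT phi := R0_meas cR.
have mf := lip1_meas lf.
have iF : (eta \x mu)%E.-integrable setT (EFin \o (f \o phi)).
  apply: (@bnd_int _ _ _ _ (`|f point| + 1)); first exact: measurableT_comp mf mphi.
  move=> p; exact: lip1_bnd.
have := integrable_fubini_F iF; apply: eq_integrable => // x _.
rewrite /fubini_F /=.
have ix : mu.-integrable setT (EFin \o (fun y => f (R0 x y))).
  apply: (@bnd_int _ _ _ _ (`|f point| + 1)); first exact: measurableT_comp mf (R0x_meas x cR).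
  move=> p; exact: lip1_bnd.
by rewrite /Rintegral fineK //; exact: integrable_fin_num ix.
Qed.

Definition Sset (mu mu' : probability B R) := [set r : R | exists2 f : B -> R, lip1 f &
         r = (\int[mu]_x f x) - (\int[mu']_x f x)].

Lemma dMKE mu mu' : dMK mu mu' = sup (Sset mu mu').
Proof. by []. Qed.

Lemma Sset_ub (mu mu' : probability B R) : has_ubound (Sset mu mu').
Proof.
exists 2 => _ [f lf ->].
have mf := lip1_meas lf.
have h1 : forall x, f x <= f point + 1.
  move=> x; have := lf x point; have := dOm_le1 (R:=R) x point.
  rewrite ler_norml => ? /andP[? ?]; lra.
have h2 : forall x, f point - 1 <= f x.
  move=> x; have := lf x point; have := dOm_le1 (R:=R) x point.
  rewrite ler_norml => ? /andP[? ?]; lra.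
have bf := lip1_bnd lf.
have i1 : forall P : probability B R, P.-integrable setT (EFin \o f).
  move=> P; exact: bnd_int mf bf.
have ic : forall (P : probability B R) (c : R), P.-integrable setT (EFin \o (fun _ : B => c)).
  move=> P c; apply: (@bnd_int _ _ _ _ `|c|) => //.
have A1 : \int[mu]_x f x <= f point + 1.
  rewrite -[X in _ <= X](@Rint_cst _ _ mu (fun _ => f point + 1)) //.
  apply: le_Rintegral; [by []|exact: i1|exact: ic|move=> x _; exact: h1].
have A2 : f point - 1 <= \int[mu']_x f x.
  rewrite -[X in X <= _](@Rint_cst _ _ mu' (fun _ => f point - 1)) //.
  apply: le_Rintegral; [by []|exact: ic|exact: i1|move=> x _; exact: h2].
lra.
Qed.

End integ.

Section key.
Context {R : realType} {m : nat}.
Local Notation B := (BOmega R m).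

Lemma key_inner (mu mu' : probability B R) (G : B -> R) (s : R) :
  measurable_fun setT G -> (forall y y', `|G y - G y'| <= s * dOm y y') ->
  (s < 0 -> forall y y' : B, y = y') ->
  \int[mu]_y G y - \int[mu']_y G y <= s * dMK mu mu'.
Proof.
move=> mG lG allE.
have bG : forall y, `|G y| <= `|G point| + `|s|.
  move=> y; have -> : G y = G point + (G y - G point) by rewrite addrC subrK.
  apply: le_trans (ler_normD _ _) _; rewrite lerD2l.
  apply: le_trans (lG y point) _.
  have := dOm_ge0 (R:=R) y point; have := dOm_le1 (R:=R) y point.
  have := ler_norm s; have := normr_ge0 s; nra.
have iG : forall P : probability B R, P.-integrable setT (EFin \o G).
  move=> P; exact: bnd_int mG bG.
have Hpos : 0 < s -> \int[mu]_y G y - \int[mu']_y G y <= s * dMK mu mu'.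
  move=> s0.
  have lip : lip1 (fun y => s^-1 * G y).
    move=> a b; rewrite -mulrBr normrM gtr0_norm ?invr_gt0 //.
    rewrite ler_pdivrMl //; exact: lG.
  have := ub_le_sup (Sset_ub mu mu') (ex_intro2 _ _ _ lip erefl).
  rewrite -dMKE (RintegralZl _ measurableT (iG mu)) (RintegralZl _ measurableT (iG mu')).
  rewrite -mulrBr => h.
  have := ler_wpM2l (ltW s0) h; rewrite mulrA mulfV ?mul1r //.
  exact: lt0r_neq0.
have Hneg : s < 0 -> \int[mu]_y G y - \int[mu']_y G y <= s * dMK mu mu'.
  move=> s0.
  have Gc : forall y, G y = G point by move=> y; rewrite (allE s0 y point).
  rewrite (Rint_cst mu Gc) (Rint_cst mu' Gc) subrr.
  have -> : dMK mu mu' = 0.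
    rewrite dMKE; have -> : Sset mu mu' = [set 0]; last exact: sup1.
    apply/seteqP; split => [_ [f lf ->]|_ ->].
      have fc : forall y, f y = f point by move=> y; rewrite (allE s0 y point).
      by rewrite (Rint_cst mu fc) (Rint_cst mu' fc) subrr.
    exists (fun _ => 0); first by move=> a b; rewrite subrr normr0 dOm_ge0.
    by rewrite (Rint_cst mu (fun _ => erefl)) (Rint_cst mu' (fun _ => erefl)) subrr.
  by rewrite mulr0.
have Hz : s = 0 -> \int[mu]_y G y - \int[mu']_y G y <= s * dMK mu mu'.
  move=> s0.
  have Gc : forall y, G y = G point.
    move=> y; apply/eqP; rewrite -subr_eq0 -normr_eq0 eq_le normr_ge0 andbT.
    by have := lG y point; rewrite s0 mul0r.
  by rewrite (Rint_cst mu Gc) (Rint_cst mu' Gc) subrr s0 mul0r.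
by case: (ltrgt0P s) => s0; [exact: Hpos|exact: Hneg|exact: Hz].
Qed.

End key.

Unset Implicit Arguments.
Theorem lemma3p1 (R : realType) (m : nat) (R0 : BOmega R m -> BOmega R m -> BOmega R m)
  (s : R) :
  contOm2 R0 ->
  (forall x y y' : BOmega R m, dOm (R0 x y) (R0 x y') <= s * dOm y y') ->
  forall (eta mu mu' rho rho' : probability (BOmega R m) R),
    is_conv R0 eta mu rho -> is_conv R0 eta mu' rho' ->
    dMK rho rho' <= s * dMK mu mu'.
Proof.
move=> cR hs eta mu mu' rho rho' h1 h2.
have allE : s < 0 -> forall y y' : BOmega R m, y = y'.
  move=> s0 y y'; apply: (@dOm_eq0 R).
  have := hs point y y'; have := dOm_ge0 (R:=R) (R0 point y) (R0 point y').
  have := dOm_ge0 (R:=R) y y' => a b c.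
  apply/eqP; rewrite eq_le a andbT; nra.
rewrite dMKE; apply: ge_sup.
  exists 0, (fun _ => 0); first by move=> a b; rewrite subrr normr0 dOm_ge0.
  by rewrite (Rint_cst rho (fun _ => erefl)) (Rint_cst rho' (fun _ => erefl)) subrr.
move=> _ [f lf ->].
rewrite (conv_int cR h1 lf) (conv_int cR h2 lf).
rewrite -RintegralB //; [|exact: Ir_int|exact: Ir_int].
have ic : eta.-integrable setT (EFin \o (fun _ : BOmega R m => s * dMK mu mu')).
  apply: (@bnd_int _ _ _ _ _ `|s * dMK mu mu'|) => //.
rewrite -[X in _ <= X](@Rint_cst R _ _ eta (fun _ => s * dMK mu mu') _ (fun _ => erefl)).
apply: le_Rintegral => //.
  have := integrableB measurableT (Ir_int eta mu cR lf) (Ir_int eta mu' cR lf).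
  by apply: eq_integrable => // x _.
move=> x _; apply: key_inner.
- exact: measurableT_comp (lip1_meas lf) (R0x_meas x cR).
- move=> y y'; exact: le_trans (lf _ _) (hs x y y').
- exact: allE.
Qed.
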